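(* Let $\mathbb{F}$ be a field and $n\geq 2$. The matrices $E_{hi}$ for $h\neq i$, $h,i=1,\dots,n$, together with the matrices $E_{hh}-E_{11}-E_{1h}+E_{h1}$ for $2\leq h\leq n$, form a basis of the Lie algebra $\mathfrak{sl}(n,\mathbb{F})$ of traceless $n\times n$ matrices, and each of these matrices has square zero.
   Context: $E_{ij}$ denotes the $n\times n$ matrix with $1$ in entry $(i,j)$ and $0$ elsewhere. *)

(* Defs.v *)
From HB Require Import structures.
From mathcomp Require Import all_boot all_order all_algebra.
Set Implicit Arguments. Unset Strict Implicit. Unset Printing Implicit Defensive.
Import GRing.Theory.
Local Open Scope ring_scope.

(* E n h i : the n x n matrix with 1 in entry (h,i) and 0 elsewhere,
   with 1-based row/column indices h, i (as in the paper). *)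
Definition E (F : fieldType) (n h i : nat) : 'M[F]_n :=
  \matrix_(r < n, c < n) (((r.+1 == h) && (c.+1 == i))%N)%:R.

Definition sl (F : fieldType) (n : nat) : {vspace 'M[F]_n} :=
  lker (linfun (fun A : 'M[F]_n => (\tr A : F^o))).

Definition sl_family (F : fieldType) (n : nat) : seq 'M[F]_n :=
  [seq E F n hi.1 hi.2 | hi <- [seq (h, i) | h <- iota 1 n, i <- iota 1 n] & hi.1 != hi.2] ++
  [seq E F n h h - E F n 1 1 - E F n 1 h + E F n h 1 | h <- iota 2 n.-1].

(* Main.v *)
Require Import Defs.
From HB Require Import structures.
From mathcomp Require Import all_boot all_order all_algebra.
From mathcomp Require Import zify.
Import GRing.Theory.
Local Open Scope ring_scope.

Lemma E_delta (F : fieldType) n (i j : 'I_n) : E F n i.+1 j.+1 = delta_mx i j.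
Proof. by apply/matrixP => r c; rewrite !mxE !eqSS. Qed.

Lemma EE0 (F : fieldType) n h i : h != i -> E F n h i *m E F n h i = 0.
Proof.
move=> hi; apply/matrixP => r c; rewrite !mxE big1 // => k _; rewrite !mxE.
case: (k.+1 =P i) => [ki|]; case: (k.+1 =P h) => [kh|] /=;
  rewrite ?andbF ?andbT /= ?mul0r ?mulr0 //.
by move: hi; rewrite -ki -kh eqxx.
Qed.

Lemma dim_sl (F : fieldType) n : ((n * n).-1 <= \dim (sl F n))%N.
Proof.
have := limg_ker_dim (linfun (fun A : 'M[F]_n => (\tr A : F^o))) fullv.
rewrite capfv dimvf => H.
have : (\dim (limg (linfun (fun A : 'M[F]_n => (\tr A : F^o)))) <= 1)%N.
  by have := dimvS (subvf (limg (linfun (fun A : 'M[F]_n => (\tr A : F^o))))); rewrite dimvf.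
rewrite /sl; move: H.
rewrite dim_matrix. set a := \dim (lker _). set b := \dim (lfun_img _ _). clearbody a b => H1 H2. have H3 : (a + b = n * n)%N := H1. have H4 : (b <= 1)%N := H2. move: a b H3 H4 {H1 H2} => a b H3 H4. lia.
Qed.

Lemma offdiag_in (F : fieldType) n (i j : 'I_n) : i != j ->
  delta_mx i j \in sl_family F n.
Proof.
move=> ij; rewrite -E_delta mem_cat; apply/orP; left.
apply/mapP; exists (i.+1, j.+1) => //.
rewrite mem_filter /= eqSS ij /=.
apply: (allpairs_f pair); by rewrite mem_iota /= add1n ltnS ltn_ord.
Qed.

Lemma B_in (F : fieldType) m (i : 'I_m.+2) : i != ord0 ->
  delta_mx i i - delta_mx ord0 ord0 - delta_mx ord0 i + delta_mx i ord0
  \in sl_family F m.+2.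
Proof.
move=> i0; rewrite mem_cat; apply/orP; right.
apply/mapP; exists i.+1.
  rewrite mem_iota /= ltnS lt0n i0 /= add2n ltnS ltn_ord //.
rewrite -(E_delta F _ ord0 ord0) -(E_delta F _ i i) -(E_delta F _ ord0 i) -(E_delta F _ i ord0) /=.
by [].
Qed.

Lemma B_sq (F : fieldType) m (i : 'I_m.+2) : i != ord0 ->
  let B := delta_mx i i - delta_mx ord0 ord0 - delta_mx ord0 i + delta_mx i ord0 : 'M[F]_m.+2 in
  B *m B = 0.
Proof.
move=> i0 B; rewrite /B !(mulmxDl, mulmxBl, mulmxDr, mulmxBr, mulmxN, mulNmx) !mul_delta_mx_cond !eqxx.
rewrite (negbTE i0) eq_sym (negbTE i0) /= !mulr0n !mulr1n ?subr0 ?sub0r ?addr0 ?add0r ?oppr0.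
by rewrite !(sub0r, addr0, opprK) !addrA !addrK subrr.
Qed.

Lemma sl_sub (F : fieldType) m : (sl F m.+2 <= <<sl_family F m.+2>>)%VS.
Proof.
apply/subvP => A; rewrite memv_ker lfunE /= => /eqP trA.
pose d := delta_mx (ord0 : 'I_m.+2) (ord0 : 'I_m.+2) : 'M[F]_m.+2.
have -> : A = \sum_i \sum_j A i j *: (delta_mx i j - (i == j)%:R *: d).
  have -> : \sum_i \sum_j A i j *: (delta_mx i j - (i == j)%:R *: d) = A - \tr A *: d.
    rewrite [X in X - _](matrix_sum_delta A) /mxtrace scaler_suml -sumrB; apply: eq_bigr => i _.
    rewrite (bigD1 i) //= [in RHS](bigD1 i) //= eqxx scale1r scalerBr [in RHS]addrAC; congr (_ + _).
    by apply: eq_bigr => j ji; rewrite eq_sym (negbTE ji) scale0r subr0.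
  by rewrite trA scale0r subr0.
apply: memv_suml => i _; apply: memv_suml => j _; apply: memvZ.
have [<-|ij] := eqVneq i j; last first.
  by rewrite scale0r subr0 memv_span // offdiag_in.
rewrite scale1r; have [->|i0] := eqVneq i ord0; first by rewrite subrr mem0v.
have -> : delta_mx i i - d = (delta_mx i i - d - delta_mx ord0 i + delta_mx i ord0)
   + delta_mx ord0 i - delta_mx i ord0.
  by rewrite [RHS]addrAC addrK subrK.
apply: memvB; [apply: memvD; apply: memv_span|apply: memv_span].
- exact: B_in.
- by apply: offdiag_in; rewrite eq_sym.
- by apply: offdiag_in.
Qed.

Lemma count_offdiag (s t : seq nat) : uniq t -> {subset s <= t} ->
  count (fun p : nat * nat => p.1 != p.2) [seq (x, y) | x <- s, y <- t] = (size s * (size t).-1)%N.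
Proof.
move=> ut; elim: s => [|x s IH] st //.
rewrite allpairs_cons count_cat IH; last by move=> y ys; apply: st; rewrite inE ys orbT.
rewrite count_map.
have cx : count (preim (pair x) (fun p : nat * nat => p.1 != p.2)) t = (size t).-1.
  have := count_predC (pred1 x) t; rewrite count_uniq_mem // (st x (mem_head _ _)) add1n.
  move=> <- /=; apply: eq_count => y /=; by rewrite eq_sym.
by rewrite cx mulSn.
Qed.

Lemma size_family (F : fieldType) n : size (sl_family F n) = (n * n.-1 + n.-1)%N.
Proof.
rewrite /sl_family size_cat !size_map size_iota size_filter count_offdiag ?iota_uniq //.
by rewrite size_iota.
Qed.

Theorem proposition1 (F : fieldType) (n : nat) (hn : (2 <= n)%N) :
  basis_of (sl F n) (sl_family F n) /\
  (forall A, A \in sl_family F n -> A *m A = 0).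
Proof.
case: n hn => [|[|m]] // _; split.
  rewrite basisEdim sl_sub andTb; apply: leq_trans (dim_sl F m.+2).
  by rewrite size_family; lia.
move=> A; rewrite mem_cat => /orP[].
  case/mapP => -[h i]; rewrite mem_filter /= => /andP[hi _] ->.
  exact: EE0.
case/mapP => h; rewrite mem_iota => /andP[h2 hm] ->.
have hlt : (h.-1 < m.+2)%N by lia.
pose j := Ordinal hlt.
have hj : h = j.+1 by rewrite /= ; lia.
have j0 : j != ord0 by apply/eqP => /(congr1 val) /=; lia.
rewrite hj (E_delta F _ j j) (E_delta F _ j ord0) (E_delta F _ ord0 j).
rewrite -[E F m.+2 1 1]/(E F m.+2 (@ord0 m.+1).+1 (@ord0 m.+1).+1) (E_delta F _ ord0 ord0).
exact: B_sq.
Qed.
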